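(* If $f\in E(S^1)$ satisfies $\operatorname{Lip}(f)<1$, then $f\in E^+(S^1)$. In particular, $E^+(S^1)$ is dense in $E(S^1)$ with respect to the sup norm.
   Context: $E(S^1)$ is the set of $1$-Lipschitz functions $f:\mathbb{R}\to\mathbb{R}$ (write $f_\alpha=f(\alpha)$) with $f_{\alpha+\pi}+f_\alpha=\pi$ for all $\alpha$, equipped with the sup norm. $S^1\subset E(S^1)$ is the set of functions $\alpha\mapsto\arccos(\cos(\alpha-\tau))$, $\tau\in\mathbb{R}$. Elements of $E(S^1)\setminus S^1$ take values in $(0,\pi)$. For such $f$ and $\beta-\alpha\notin\pi\mathbb{Z}$, \[ p_{\alpha,\beta}(f)=\frac{1-\cos(\beta-\alpha)^2-\cos(f_\alpha)^2-\cos(f_\beta)^2+2\cos(\beta-\alpha)\cos(f_\alpha)\cos(f_\beta)}{\sin(\beta-\alpha)^2\sin(f_\alpha)^2\sin(f_\beta)^2}. \] $E^+(S^1)$ denotes the set of $f\in E(S^1)\setminus S^1$ with $p_{\alpha,\beta}(f)>0$ for all $\alpha,\beta$ with $\alpha\ne\beta$ mod $\pi$. *)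

(* Defs.v *)
From Stdlib Require Import Reals Ratan.
Open Scope R_scope.

Definition lipschitz_with (L : R) (f : R -> R) : Prop :=
  forall x y : R, Rabs (f x - f y) <= L * Rabs (x - y).

Definition in_E (f : R -> R) : Prop :=
  lipschitz_with 1 f /\ forall a : R, f (a + PI) + f a = PI.

Definition in_S1 (f : R -> R) : Prop :=
  exists tau : R, forall a : R, f a = acos (cos (a - tau)).

Definition p_ab (alpha beta : R) (f : R -> R) : R :=
  (1 - (cos (beta - alpha))^2 - (cos (f alpha))^2 - (cos (f beta))^2
     + 2 * cos (beta - alpha) * cos (f alpha) * cos (f beta))
  / ((sin (beta - alpha))^2 * (sin (f alpha))^2 * (sin (f beta))^2).

Definition cong_mod_pi (alpha beta : R) : Prop :=
  exists k : Z, beta - alpha = IZR k * PI.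

Definition in_Eplus (f : R -> R) : Prop :=
  in_E f /\ ~ in_S1 f /\
  forall alpha beta : R, ~ cong_mod_pi alpha beta -> p_ab alpha beta f > 0.

(* Main.v *)
Require Import Defs.
From Stdlib Require Import Reals Ratan Lra Lia.
Open Scope R_scope.

Lemma per_nat (g : R -> R) : (forall x, g (x + 2 * PI) = g x) ->
  forall (m : nat) x, g (x + 2 * INR m * PI) = g x.
Proof.
  intros Hg m; induction m as [|m IH]; intro x.
  - simpl. f_equal; ring.
  - rewrite S_INR. replace (x + 2 * (INR m + 1) * PI) with ((x + 2 * INR m * PI) + 2 * PI) by ring.
    rewrite Hg. apply IH.
Qed.

Lemma per_Z (g : R -> R) : (forall x, g (x + 2 * PI) = g x) ->
  forall (n : Z) x, g (x + 2 * IZR n * PI) = g x.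
Proof.
  intros Hg n x. destruct (Z.le_gt_cases 0 n) as [h|h].
  - destruct (IZN n h) as [m ->]. rewrite <- INR_IZR_INZ. apply per_nat; auto.
  - assert (h' : (0 <= - n)%Z) by lia. destruct (IZN _ h') as [m Hm].
    replace n with (- Z.of_nat m)%Z by lia. rewrite opp_IZR, <- INR_IZR_INZ.
    rewrite <- (per_nat g Hg m (x + 2 * - INR m * PI)). f_equal; ring.
Qed.

Lemma E_per f : in_E f -> forall x, f (x + 2 * PI) = f x.
Proof.
  intros [_ H] x. pose proof (H x). pose proof (H (x + PI)).
  replace (x + 2 * PI) with (x + PI + PI) by ring. lra.
Qed.

Lemma E_range f : in_E f -> forall a, 0 <= f a <= PI.
Proof.
  intros [HL H] a. pose proof (H a). pose proof (HL (a + PI) a) as h.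
  replace (a + PI - a) with PI in h by ring. rewrite (Rabs_right PI) in h by (pose proof PI_RGT_0; lra).

  destruct (Rcase_abs (f (a + PI) - f a)) as [c|c];
   [rewrite Rabs_left in h by lra | rewrite Rabs_right in h by lra]; lra.
Qed.

Lemma E_range_strict f L : in_E f -> L < 1 -> lipschitz_with L f -> forall a, 0 < f a < PI.
Proof.
  intros [HL H] HL1 Hl a. pose proof (H a). pose proof (Hl (a + PI) a) as h.
  pose proof PI_RGT_0.
  replace (a + PI - a) with PI in h by ring. rewrite (Rabs_right PI) in h by lra.
  assert (L * PI < PI) by nra.
  destruct (Rcase_abs (f (a + PI) - f a)) as [c|c];
   [rewrite Rabs_left in h by lra | rewrite Rabs_right in h by lra]; lra.
Qed.

Lemma cos_abs x : cos (Rabs x) = cos x.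
Proof.
  destruct (Rcase_abs x); [rewrite Rabs_left by lra; apply cos_neg | rewrite Rabs_right by lra; auto].
Qed.

Lemma key f L : in_E f -> L < 1 -> lipschitz_with L f ->
  forall al be, ~ cong_mod_pi al be -> cos (f be - f al) > cos (be - al).
Proof.
  intros HE HL1 Hl al be Hc. pose proof PI_RGT_0 as Hpi.
  set (th := be - al).
  set (q := (th + PI) / (2 * PI)).
  destruct (base_Int_part q) as [h1 h2].
  set (n := Int_part q) in *.
  assert (Hq : q * (2 * PI) = th + PI) by (unfold q; field; lra).
  set (t := th - 2 * IZR n * PI).
  assert (Ht1 : - PI <= t) by (unfold t; nra).
  assert (Ht2 : t < PI) by (unfold t; nra).
  assert (Hbe : be = (al + t) + 2 * IZR n * PI) by (unfold t, th; ring).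
  assert (Hfb : f be = f (al + t)) by (rewrite Hbe; apply per_Z; apply E_per; auto).
  assert (Hcos : cos th = cos t).
  { replace th with (t + 2 * IZR n * PI) by (unfold t; ring). apply per_Z.
    intro x. rewrite cos_plus, cos_2PI, sin_2PI. ring. }
  assert (Htn : t <> 0).
  { intro E. apply Hc. exists (2 * n)%Z. rewrite mult_IZR. fold th. unfold t in E. lra. }
  assert (Hpos : 0 < Rabs t) by (apply Rabs_pos_lt; auto).
  assert (Htle : Rabs t <= PI) by (apply Rabs_le; lra).
  pose proof (Hl (al + t) al) as hl. replace (al + t - al) with t in hl by ring.
  assert (Hlt : Rabs (f (al + t) - f al) < Rabs t) by nra.
  rewrite Hfb, Hcos, <- cos_abs, <- (cos_abs t).
  apply cos_decreasing_1; auto using Rabs_pos; lra.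
Qed.

Lemma part1 f : in_E f -> (exists L : R, L < 1 /\ lipschitz_with L f) -> in_Eplus f.
Proof.
  intros HE [L [HL1 Hl]]. pose proof PI_RGT_0 as Hpi.
  pose proof (E_range_strict f L HE HL1 Hl) as Hr.
  split; [exact HE | split].
  - intros [tau Ht]. specialize (Ht tau). rewrite Rminus_diag, cos_0, acos_1 in Ht.
    specialize (Hr tau). lra.
  - intros al be Hc. unfold p_ab.
    set (a := f al). set (b := f be). set (c := cos (be - al)).
    assert (K1 : cos (b - a) > c) by (apply (key f L); auto).
    assert (Hc' : ~ cong_mod_pi (al + PI) be).
    { intros [k Hk]. apply Hc. exists (k + 1)%Z. rewrite plus_IZR. lra. }
    pose proof (key f L HE HL1 Hl (al + PI) be Hc') as K2.
    assert (Ea : f (al + PI) = PI - a) by (destruct HE as [_ H]; specialize (H al); unfold a; lra).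
    fold a b in K2. rewrite Ea in K2.
    replace (b - (PI - a)) with ((a + b) + - PI) in K2 by ring.
    replace (be - (al + PI)) with ((be - al) + - PI) in K2 by ring.
    assert (CP : forall x, cos (x + - PI) = - cos x).
    { intro x. rewrite cos_plus, cos_neg, sin_neg, cos_PI, sin_PI. ring. }
    rewrite !CP in K2.
    fold c in K2. assert (K3 : cos (a + b) < c) by lra.
    assert (Id : 1 - c ^ 2 - cos a ^ 2 - cos b ^ 2 + 2 * c * cos a * cos b
               = (c - cos (a + b)) * (cos (b - a) - c)).
    { rewrite cos_plus, cos_minus.
      assert (sin a ^ 2 = 1 - cos a ^ 2) by (pose proof (sin2 a); pose proof (sin2 b); unfold Rsqr in *; nra).
      assert (sin b ^ 2 = 1 - cos b ^ 2) by (pose proof (sin2 a); pose proof (sin2 b); unfold Rsqr in *; nra).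
      nra. }
    rewrite Id. apply Rdiv_lt_0_compat.
    + apply Rmult_lt_0_compat; lra.
    + assert (sin (be - al) <> 0).
      { intro E. apply sin_eq_0_0 in E. destruct E as [k Hk]. apply Hc. exists k. exact Hk. }
      assert (0 < sin a) by (apply sin_gt_0; apply Hr).
      assert (0 < sin b) by (apply sin_gt_0; apply Hr).
      assert (0 < sin (be - al) ^ 2) by (simpl; rewrite Rmult_1_r; apply Rsqr_pos_lt; auto).
      apply Rmult_lt_0_compat; [apply Rmult_lt_0_compat|]; auto; apply pow_lt; auto.
Qed.

Theorem lemma3p3 :
  (forall f : R -> R, in_E f ->
     (exists L : R, L < 1 /\ lipschitz_with L f) -> in_Eplus f)
  /\
  (forall f : R -> R, in_E f -> forall eps : R, eps > 0 ->
     exists g : R -> R, in_Eplus g /\ forall x : R, Rabs (f x - g x) < eps).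
Proof.
  split; [exact part1|].
  intros f HE eps Heps. pose proof PI_RGT_0 as Hpi.
  set (s := Rmin (1/2) (eps / PI)).
  assert (Hs1 : s <= 1/2) by apply Rmin_l.
  assert (Hs2 : s <= eps / PI) by apply Rmin_r.
  assert (Hs0 : 0 < s) by (apply Rmin_glb_lt; [lra | apply Rdiv_lt_0_compat; lra]).
  assert (HsP : s * PI <= eps) by (apply (Rmult_le_compat_r PI) in Hs2; [|lra]; field_simplify in Hs2; lra).
  exists (fun x => (1 - s) * f x + s * (PI / 2)).
  assert (Hlip : lipschitz_with (1 - s) (fun x => (1 - s) * f x + s * (PI / 2))).
  { intros x y. destruct HE as [HL _]. specialize (HL x y).
    replace ((1 - s) * f x + s * (PI / 2) - ((1 - s) * f y + s * (PI / 2))) with ((1 - s) * (f x - f y)) by ring.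
    rewrite Rabs_mult, (Rabs_right (1 - s)) by lra. nra. }
  assert (HE' : in_E (fun x => (1 - s) * f x + s * (PI / 2))).
  { split.
    - intros x y. specialize (Hlip x y). pose proof (Rabs_pos (x - y)). nra.
    - intro a. destruct HE as [_ H]. specialize (H a). nra. }
  split.
  - apply part1; auto. exists (1 - s). split; [lra | auto].
  - intro x. pose proof (E_range f HE x).
    replace (f x - ((1 - s) * f x + s * (PI / 2))) with (s * (f x - PI / 2)) by ring.
    rewrite Rabs_mult, (Rabs_right s) by lra.
    assert (Rabs (f x - PI / 2) <= PI / 2) by (apply Rabs_le; lra). nra.
Qed.
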